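(* Let $A$ be an integral domain with fraction field $K$, and let $U$ and $A^{\operatorname{ua}}$ be as in the context. Then $[1]^{\mathrm{reg}(A)}_A = [1]^{A^\circ}_A = \mathbb{Z}\langle U \rangle = U \cup \{0\}$, and therefore $A^{\operatorname{ua}} = ([1]^{\mathrm{reg}(A)}_A \setminus \{0\})^{-1}A$. Moreover, $[1]^{\mathrm{reg}(A)}_A=A$ if and only if $K$ is the only unit-additive overring of $A$.
   Context: A commutative ring is unit-additive if for all units $u,v$, $u+v$ is a unit or nilpotent. For the domain $A$, $\mathrm{reg}(A)=A^\circ=A\setminus\{0\}$. Define $W_0=\{1\}$, $V_0=A^\times$, and for $i\ge1$ let $W_i$ be the set of nonzero finite sums of elements of $V_{i-1}$ and $V_i=\{x\in A\mid ax\in W_i\text{ for some nonzero } a\in A\}$; set $U=\bigcup_i V_i$. It is known that $U$ is a saturated multiplicative set closed under nonzero sums and that $A^{\operatorname{ua}}:=U^{-1}A$ is the unique smallest unit-additive overring of $A$ (the unit-additive closure). For $T\subseteq A$, $[1]^T_A$ is the smallest additive subgroup $F$ of $A$ containing $1$ such that $ta\in F$ with $t\in T$, $a\in A$ implies $a\in F$. $\mathbb{Z}\langle U\rangle$ is the subring of $A$ generated by $U$. *)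

(* Defs.v *)
From mathcomp Require Import all_boot all_algebra fraction.
Set Implicit Arguments. Unset Strict Implicit. Unset Printing Implicit Defensive.
Import GRing.Theory.
Local Open Scope ring_scope.

Section UA.
Variable A : idomainType.

Definition regular (t : A) : Prop := forall a : A, t * a = 0 -> a = 0.
Definition nonzeroA (t : A) : Prop := t != 0.

Definition nzsums (P : A -> Prop) (y : A) : Prop :=
  y != 0 /\ exists s : seq A, (forall z, z \in s -> P z) /\ y = \sum_(z <- s) z.

Fixpoint Vset (i : nat) : A -> Prop :=
  match i with
  | 0 => fun x => x \is a GRing.unit
  | i'.+1 => fun x => exists a : A, a != 0 /\ nzsums (Vset i') (a * x)
  end.

Definition Wset (i : nat) : A -> Prop :=
  match i with
  | 0 => fun x => x = 1
  | i'.+1 => nzsums (Vset i')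
  end.

Definition Uset (x : A) : Prop := exists i, Vset i x.

Definition one_closure (T : A -> Prop) (x : A) : Prop :=
  forall F : A -> Prop,
    F 0 -> (forall y z, F y -> F z -> F (y - z)) -> F 1 ->
    (forall t a, T t -> F (t * a) -> F a) -> F x.

Definition gen_subring (S : A -> Prop) (x : A) : Prop :=
  forall F : A -> Prop,
    F 1 -> (forall y z, F y -> F z -> F (y - z)) ->
    (forall y z, F y -> F z -> F (y * z)) ->
    (forall u, S u -> F u) -> F x.

Definition localization (S : A -> Prop) (z : {fraction A}) : Prop :=
  exists a s : A, S s /\ z = (FracField.tofrac a) / (FracField.tofrac s).

Definition ua_closure : {fraction A} -> Prop := localization Uset.

Definition overring (R : {fraction A} -> Prop) : Prop :=
  R 1 /\ (forall y z, R y -> R z -> R (y - z)) /\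
  (forall y z, R y -> R z -> R (y * z)) /\
  (forall a : A, R (FracField.tofrac a)).

Definition unit_in (R : {fraction A} -> Prop) (u : {fraction A}) : Prop :=
  R u /\ exists w, R w /\ u * w = 1.

Definition unit_additive (R : {fraction A} -> Prop) : Prop :=
  forall u v, unit_in R u -> unit_in R v ->
    unit_in R (u + v) \/ exists n : nat, (u + v) ^+ n = 0.

End UA.

(* Main.v *)
Require Import Defs.
From mathcomp Require Import all_boot all_algebra fraction ring.
Import GRing.Theory.
Local Open Scope ring_scope.
Set Implicit Arguments. Unset Strict Implicit.

Lemma sum_allpairs (A : idomainType) (s t : seq A) :
  \sum_(z <- [seq u * v | u <- s, v <- t]) z = (\sum_(u <- s) u) * (\sum_(v <- t) v).
Proof.
elim: s => [|u s IH]; first by rewrite !big_nil mul0r.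
have -> : [seq u0 * v | u0 <- u :: s, v <- t] = [seq u * v | v <- t] ++ [seq u0 * v | u0 <- s, v <- t] by [].
rewrite big_cat IH big_cons mulrDl big_map; congr (_ + _); by rewrite mulr_sumr.
Qed.

Lemma Vset_neq0 (A : idomainType) i (x : A) : Vset i x -> x != 0.
Proof.
case: i => [|i] /=.
  by apply: contraTneq => ->; rewrite unitr0.
move=> [a [_ [ax0 _]]]; apply: contraNneq ax0 => ->; by rewrite mulr0.
Qed.

Lemma Vset_nz1 (A : idomainType) i (x : A) : Vset i x -> nzsums (Vset i) x.
Proof.
move=> h; split; first exact: Vset_neq0 h.
exists [:: x]; split; last by rewrite big_seq1.
by move=> z; rewrite inE => /eqP ->.
Qed.

Lemma Vset_S (A : idomainType) i (x : A) : Vset i x -> Vset i.+1 x.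
Proof. by move=> h; exists 1; rewrite oner_neq0 mul1r; split => //; apply: Vset_nz1. Qed.

Lemma Vset_mono (A : idomainType) i j (x : A) : (i <= j)%N -> Vset i x -> Vset j x.
Proof.
elim: j => [|j IH]; first by rewrite leqn0 => /eqP ->.
rewrite leq_eqVlt => /orP [/eqP -> //|]; rewrite ltnS => hij h.
exact/Vset_S/IH.
Qed.

Lemma common_bound (A : idomainType) (s : seq A) :
  (forall z, z \in s -> Uset z) -> exists k, forall z, z \in s -> Vset k z.
Proof.
elim: s => [|u s IH] H; first by exists 0%N.
have [k Hk] : exists k, forall z, z \in s -> Vset k z.
  by apply: IH => z zs; apply: H; rewrite inE zs orbT.
have [i Hi] : Uset u by apply: H; rewrite inE eqxx.
exists (maxn i k) => z; rewrite inE => /orP [/eqP ->|zs].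
  by apply: Vset_mono Hi; rewrite leq_maxl.
by apply: Vset_mono (Hk _ zs); rewrite leq_maxr.
Qed.

Lemma U_nzsums (A : idomainType) (y : A) : nzsums (@Uset A) y -> Uset y.
Proof.
move=> [y0 [s [Hs ey]]]; have [k Hk] := common_bound Hs.
exists k.+1; exists 1; rewrite oner_neq0 mul1r; split => //; split => //.
by exists s; split => // z zs; exact: Hk.
Qed.

Lemma U_add (A : idomainType) (x y : A) : Uset x -> Uset y -> x + y != 0 -> Uset (x + y).
Proof.
move=> hx hy h; apply: U_nzsums; split => //; exists [:: x; y]; split.
  by move=> z; rewrite !inE => /orP [] /eqP ->.
by rewrite !big_cons big_nil addr0.
Qed.

Lemma U_opp (A : idomainType) (x : A) : Uset x -> Uset (- x).
Proof.
move=> [i hi]; exists i.+1; exists (-1); split; first by rewrite oppr_eq0 oner_neq0.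
by rewrite mulN1r opprK; apply: Vset_nz1.
Qed.

Lemma U_sat (A : idomainType) (t a : A) : t != 0 -> Uset (t * a) -> Uset a.
Proof. by move=> t0 [i hi]; exists i.+1; exists t; split => //; apply: Vset_nz1. Qed.

Lemma U_one (A : idomainType) : Uset (1 : A).
Proof. by exists 0%N; exact: unitr1. Qed.

Lemma Vset_unitl (A : idomainType) j (x y : A) : x \is a GRing.unit -> Vset j y -> Vset j.+1 (x * y).
Proof.
move=> xu hy; exists x^-1; split; first by rewrite invr_eq0; apply: (@Vset_neq0 A 0%N).
by rewrite mulKr //; apply: Vset_nz1.
Qed.

Lemma Vset_mul (A : idomainType) i j (x y : A) : Vset i x -> Vset j y -> Vset (i + j).+1 (x * y).
Proof.
elim: i j x y => [|i IH] j x y hx hy; first exact: Vset_unitl.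
case: j hy => [|j] hy.
  by rewrite mulrC addn0; apply: Vset_unitl.
move: hx hy => [a [a0 [ax0 [s [Hs es]]]]] [b [b0 [by0 [t [Ht et]]]]].
apply: Vset_S; rewrite addnS addSn.
exists (a * b); split; first by rewrite mulf_neq0.
have e : a * b * (x * y) = (a * x) * (b * y) by ring.
rewrite e; split; first by rewrite mulf_neq0.
exists [seq u * v | u <- s, v <- t]; split; last by rewrite sum_allpairs es et.
move=> z /allpairsP [[u v] /= [us vt ->]].
exact: IH (Hs _ us) (Ht _ vt).
Qed.

Lemma U_mul (A : idomainType) (x y : A) : Uset x -> Uset y -> Uset (x * y).
Proof. by move=> [i hi] [j hj]; exists (i + j).+1; apply: Vset_mul. Qed.

Lemma regularE (A : idomainType) (t : A) : regular t <-> nonzeroA t.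
Proof.
rewrite /regular /nonzeroA; split.
  by move=> h; apply/eqP => t0; move: (h 1); rewrite t0 mul0r => /(_ erefl) /eqP; rewrite oner_eq0.
by move=> t0 a /eqP; rewrite mulf_eq0 (negbTE t0) /= => /eqP.
Qed.

Lemma one_closure_ext (A : idomainType) (T T' : A -> Prop) x :
  (forall t, T t <-> T' t) -> one_closure T x -> one_closure T' x.
Proof.
move=> e h F h0 hB h1 hS; apply: (h F h0 hB h1) => t a /e; exact: hS.
Qed.

Lemma C_to_S (A : idomainType) (x : A) : one_closure (@nonzeroA A) x -> Uset x \/ x = 0.
Proof.
move=> h; apply: (h (fun x => Uset x \/ x = 0)); [by right| |by left; apply: U_one|].
- move=> y z hy hz; have [->|yz0] := eqVneq (y - z) 0; first by right.
  left; case: hy => [hy|y0]; case: hz => [hz|z0].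
  + exact: U_add hy (U_opp hz) yz0.
  + by rewrite z0 subr0.
  + by rewrite y0 sub0r; apply: U_opp.
  + by move: yz0; rewrite y0 z0 subrr eqxx.
- move=> t a t0 [hta|]; last by move/eqP; rewrite mulf_eq0 (negbTE t0) /= => /eqP; right.
  by left; apply: U_sat hta.
Qed.

Lemma S_to_G (A : idomainType) (x : A) : Uset x \/ x = 0 -> gen_subring (@Uset A) x.
Proof.
move=> h F h1 hB hM hU; case: h => [/hU //|->].
by rewrite -(subrr (1 : A)); apply: hB.
Qed.

Lemma G_to_S (A : idomainType) (x : A) : gen_subring (@Uset A) x -> Uset x \/ x = 0.
Proof.
move=> h; apply: (h (fun x => Uset x \/ x = 0)); [by left; apply: U_one| | |by move=> u; left].
- move=> y z hy hz; have [->|yz0] := eqVneq (y - z) 0; first by right.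
  left; case: hy => [hy|y0]; case: hz => [hz|z0].
  + exact: U_add hy (U_opp hz) yz0.
  + by rewrite z0 subr0.
  + by rewrite y0 sub0r; apply: U_opp.
  + by move: yz0; rewrite y0 z0 subrr eqxx.
- move=> y z [hy|->] [hz|->]; rewrite ?mulr0 ?mul0r; try by right.
  by left; apply: U_mul.
Qed.

Lemma S_to_C (A : idomainType) (x : A) : Uset x \/ x = 0 -> one_closure (@nonzeroA A) x.
Proof.
move=> h F h0 hB h1 hS.
have hD : forall y z, F y -> F z -> F (y + z).
  by move=> y z hy hz; rewrite -[z]opprK -[- z]sub0r; apply: (hB) => //; apply: (hB).
have hsum : forall s : seq A, (forall z, z \in s -> F z) -> F (\sum_(z <- s) z).
  elim=> [|u s IH] hs; first by rewrite big_nil.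
  rewrite big_cons; apply: hD; first by apply: hs; rewrite inE eqxx.
  by apply: IH => z zs; apply: hs; rewrite inE zs orbT.
case: h => [[i hi]|-> //].
elim: i x hi => [|i IH] x /=.
  move=> xu; apply: (hS x^-1); first by rewrite /nonzeroA invr_eq0; apply: (@Vset_neq0 A 0%N).
  by rewrite mulVr.
move=> [a [a0 [ax0 [s [Hs es]]]]]; apply: (hS a) => //.
by rewrite es; apply: hsum => z zs; apply: IH; apply: Hs.
Qed.

Lemma char1 (A : idomainType) (x : A) :
     (one_closure (@regular A) x <-> one_closure (@nonzeroA A) x) /\
     (one_closure (@nonzeroA A) x <-> gen_subring (@Uset A) x) /\
     (gen_subring (@Uset A) x <-> (Uset x \/ x = 0)).
Proof.
split; [|split; [|split]].
- split; apply: one_closure_ext => t; [|split; move/regularE => //]; exact: regularE.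
- split; [move/C_to_S/S_to_G|move/G_to_S/S_to_C] => //.
- exact: G_to_S.
- exact: S_to_G.
Qed.

Lemma C_reg_iff (A : idomainType) (s : A) :
  (one_closure (@regular A) s /\ s != 0) <-> Uset s.
Proof.
have [h1 [h2 h3]] := char1 s.
split.
  by move=> [/h1/h2/h3 [//|->]]; rewrite eqxx.
move=> hs; split; last by case: hs => i; apply: Vset_neq0.
by apply/h1/h2/h3; left.
Qed.

Local Notation tf := (@FracField.tofrac _).
Lemma fsub (F : fieldType) (a s b t : F) : s != 0 -> t != 0 -> a/s - b/t = (a*t - b*s)/(s*t).
Proof. by move=> s0 t0; field; rewrite s0 t0. Qed.
Lemma fadd (F : fieldType) (a s b t : F) : s != 0 -> t != 0 -> a/s + b/t = (a*t + b*s)/(s*t).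
Proof. by move=> s0 t0; field; rewrite s0 t0. Qed.
Lemma fmul (F : fieldType) (a s b t : F) : s != 0 -> t != 0 -> a/s * (b/t) = (a*b)/(s*t).
Proof. by move=> s0 t0; field; rewrite s0 t0. Qed.
Lemma finv (F : fieldType) (a s : F) : s != 0 -> a != 0 -> a/s * (s/a) = 1.
Proof. by move=> s0 t0; field; rewrite s0 t0. Qed.

Lemma frac_repr (A : idomainType) (z : {fraction A}) :
  exists a b : A, b != 0 /\ z = tf a / tf b.
Proof.
elim/quotW: z => x.
exists (\n_x), (\d_x); split; first exact: denom_ratioP.
unlock FracField.tofrac.
rewrite !piE /= /FracField.mulf /FracField.invf /=.
rewrite !numden_Ratio ?oner_neq0 ?denom_ratioP //.
by rewrite mulr1 mul1r Ratio_numden.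
Qed.

Lemma tf_neq0 (A : idomainType) (x : A) : x != 0 -> tf x != 0.
Proof. by rewrite tofrac_eq0. Qed.

Lemma U_tf_neq0 (A : idomainType) (x : A) : Uset x -> tf x != 0.
Proof. by move=> [i hi]; apply: tf_neq0; apply: Vset_neq0 hi. Qed.

Lemma ua_overring (A : idomainType) : overring (@ua_closure A).
Proof.
split; [|split; [|split]].
- exists 1, 1; split; first exact: U_one.
  by rewrite tofrac1 invr1 mulr1.
- move=> y z [a [s [hs ->]]] [b [t [ht ->]]].
  exists (a * t - b * s), (s * t); split; first exact: U_mul.
  have s0 := U_tf_neq0 hs; have t0 := U_tf_neq0 ht.
  by rewrite tofracB !tofracM fsub.
- move=> y z [a [s [hs ->]]] [b [t [ht ->]]].
  exists (a * b), (s * t); split; first exact: U_mul.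
  have s0 := U_tf_neq0 hs; have t0 := U_tf_neq0 ht.
  by rewrite !tofracM fmul.
- move=> a; exists a, 1; split; first exact: U_one.
  by rewrite tofrac1 invr1 mulr1.
Qed.

Lemma ua_unit_num (A : idomainType) (u : {fraction A}) :
  unit_in (@ua_closure A) u -> exists a s, Uset a /\ Uset s /\ u = tf a / tf s.
Proof.
move=> [[a [s [hs eu]]] [w [[b [t [ht ew]]] uw]]].
exists a, s; split => //.
have s0 := U_tf_neq0 hs; have t0 := U_tf_neq0 ht.
have e : tf (a * b) = tf (s * t).
  rewrite !tofracM; move: uw; rewrite eu ew fmul //.
  move/(congr1 (fun q => q * (tf s * tf t))).
  by rewrite divfK ?mul1r // mulf_neq0.
move/eqP: e; rewrite tofrac_eq => /eqP e.
have st0 : s * t != 0 by have [k hk] := U_mul hs ht; exact: Vset_neq0 hk.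
have b0 : b != 0 by apply: contraNneq st0 => b0; rewrite -e b0 mulr0.
apply: (@U_sat _ b) => //; rewrite mulrC e; exact: U_mul.
Qed.

Lemma ua_additive (A : idomainType) : unit_additive (@ua_closure A).
Proof.
move=> u v /ua_unit_num [a [s [ha [hs eu]]]] /ua_unit_num [c [t [hc [ht ev]]]].
have s0 := U_tf_neq0 hs; have t0 := U_tf_neq0 ht.
have e : u + v = tf (a * t + c * s) / tf (s * t).
  by rewrite eu ev tofracD !tofracM fadd.
have [n0|n0] := eqVneq (a * t + c * s) 0.
  by right; exists 1%N; rewrite expr1 e n0 tofrac0 mul0r.
have hn : Uset (a * t + c * s) by apply: U_add => //; apply: U_mul.
have nn0 := U_tf_neq0 hn.
left; split; first by rewrite e; exists (a * t + c * s), (s * t); split => //; apply: U_mul.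
exists (tf (s * t) / tf (a * t + c * s)); split.
  by exists (s * t), (a * t + c * s); split.
by rewrite e finv // tofracM mulf_neq0.
Qed.

Lemma sum_units (A : idomainType) (R : {fraction A} -> Prop) (s : seq A) :
  unit_additive R -> (forall z, z \in s -> unit_in R (tf z)) ->
  \sum_(z <- s) tf z = 0 \/ unit_in R (\sum_(z <- s) tf z).
Proof.
move=> UA; elim: s => [|x s IH] hs; first by rewrite big_nil; left.
rewrite big_cons.
have hx : unit_in R (tf x) by apply: hs; rewrite inE eqxx.
have [->|hS] : \sum_(z <- s) tf z = 0 \/ unit_in R (\sum_(z <- s) tf z).
- by apply: IH => z zs; apply: hs; rewrite inE zs orbT.
- by right; rewrite addr0.
have [h|[n hn]] := UA _ _ hx hS; first by right.
by left; apply/eqP; move/eqP: hn; rewrite expf_eq0 => /andP [].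
Qed.

Lemma ua_units (A : idomainType) (R : {fraction A} -> Prop) i (x : A) :
  overring R -> unit_additive R -> Vset i x -> unit_in R (tf x).
Proof.
move=> [R1 [RB [RM RA]]] UA; elim: i x => [|i IH] x /=.
  move=> xu; split => //; exists (tf x^-1); split => //.
  by rewrite -tofracM mulrV // tofrac1.
move=> [a [a0 [ax0 [s [Hs es]]]]].
have [h0|[_ [w [Rw hw]]]] : \sum_(z <- s) tf z = 0 \/ unit_in R (\sum_(z <- s) tf z).
- by apply: sum_units => // z zs; apply: IH; apply: Hs.
- by move: ax0; rewrite -tofrac_eq0 es rmorph_sum h0 eqxx.
split => //; exists (tf a * w); split; first exact: RM.
by rewrite mulrA -tofracM [x * a]mulrC es rmorph_sum.
Qed.

Lemma finv_eq (F : fieldType) (x a s : F) : x != 0 -> s != 0 -> x^-1 = a / s -> s = a * x.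
Proof.
move=> x0 s0 e; rewrite -(divfK s0 a) -e.
by rewrite mulrAC mulVf ?mul1r.
Qed.

Unset Implicit Arguments.

Theorem theorem9p8 (A : idomainType) :
  (forall x : A,
     (one_closure (@regular A) x <-> one_closure (@nonzeroA A) x) /\
     (one_closure (@nonzeroA A) x <-> gen_subring (@Uset A) x) /\
     (gen_subring (@Uset A) x <-> (Uset x \/ x = 0))) /\
  (forall z : {fraction A},
     ua_closure z <->
     localization (fun s : A => one_closure (@regular A) s /\ s != 0) z) /\
  ((forall x : A, one_closure (@regular A) x) <->
   (forall R : {fraction A} -> Prop, overring R ->
      (unit_additive R <-> (forall z, R z)))).
Proof.
split; first by move=> x; exact: char1.
split.
  move=> z; split; move=> [a [s [hs ->]]]; exists a, s; split => //.
    by apply/C_reg_iff.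
  by move/C_reg_iff: hs.
split.
- move=> Hall R HR; split.
  + move=> UA z; have [a [b [b0 ->]]] := frac_repr z.
    have hb : Uset b.
      have [h1 [h2 h3]] := char1 b.
      by case: (proj1 h3 (proj1 h2 (proj1 h1 (Hall b)))) => // b0'; move: b0; rewrite b0' eqxx.
    have [i hi] := hb; have [_ [w [Rw hw]]] := ua_units HR UA hi.
    have -> : (tf b)^-1 = w.
      by apply: (mulfI (tf_neq0 b0)); rewrite mulfV ?tf_neq0.
    by case: HR => [_ [_ [RM RA]]]; apply: RM.
  + move=> Rall u v hu hv; have [->|n0] := eqVneq (u + v) 0.
      by right; exists 1%N; rewrite expr1.
    left; split; first exact: Rall.
    by exists (u + v)^-1; split; [exact: Rall|exact: mulfV].
- move=> H x; have [h1 [h2 h3]] := char1 x.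
  apply/h1/h2/h3.
  have [->|x0] := eqVneq x 0; first by right.
  left.
  have Rall := (H _ (@ua_overring A)).1 (@ua_additive A).
  have [a [s [hs es]]] := Rall (tf x)^-1.
  have e := finv_eq (tf_neq0 x0) (U_tf_neq0 hs) es.
  move/eqP: e; rewrite -tofracM tofrac_eq => /eqP e.
  have a0 : a != 0.
    by apply: contraTneq isT => a0; move: (U_tf_neq0 hs); rewrite e a0 mul0r tofrac0 eqxx.
  by apply: (U_sat a0); rewrite -e.
Qed.
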